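(* Let $f:[0,1]\to\mathbb{R}$ with $f(0),f(1)\in\mathbb{Z}$. Set $\Phi(x):=6\big(x\ln x+(1-x)\ln(1-x)\big)$. (a) If $f(x)-\Phi(x)$ is convex on $[0,1]$, then $\widetilde{B}_n(f)$ and $\widehat{B}_n(f)$ are convex on $[0,1]$ for all $n\in\mathbb{N}_+$. (b) If $f(x)+\Phi(x)$ is concave on $[0,1]$, then $\widetilde{B}_n(f)$ and $\widehat{B}_n(f)$ are concave on $[0,1]$ for all $n\in\mathbb{N}_+$.
   Context: $\Phi$ is taken with the usual continuous extension $0\ln 0=0$ at $x=0,1$. For $n\in\mathbb{N}_+$ and $f:[0,1]\to\mathbb{R}$, define $\widetilde{B}_n(f)(x):=\sum_{k=0}^n \left[f\left(\frac{k}{n}\right)\binom{n}{k}\right]x^k(1-x)^{n-k}$, where $[\alpha]$ is the largest integer $\le\alpha$, and $\widehat{B}_n(f)(x):=\sum_{k=0}^n \left\langle f\left(\frac{k}{n}\right)\binom{n}{k}\right\rangle x^k(1-x)^{n-k}$, where $\langle\alpha\rangle$ is the integer nearest to $\alpha$ (when $\alpha$ is a half-integer, $\langle\alpha\rangle$ may be either neighbouring integer, chosen arbitrarily; the result holds for any such choice). *)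

(* Defs.v *)
From mathcomp Require Import all_boot all_order all_algebra.
From mathcomp Require Import all_classical all_reals all_analysis.
Set Implicit Arguments. Unset Strict Implicit. Unset Printing Implicit Defensive.
Import Order.TTheory GRing.Theory Num.Theory.
Local Open Scope ring_scope.

Section Defs.
Variable R : realType.

Definition xlnx (x : R) : R := if x == 0 then 0 else x * ln x.

Definition Phi (x : R) : R := 6 * (xlnx x + xlnx (1 - x)).

Definition convex01 (g : R -> R) : Prop :=
  forall x y t : R, 0 <= x <= 1 -> 0 <= y <= 1 -> 0 <= t <= 1 ->
    g (t * x + (1 - t) * y) <= t * g x + (1 - t) * g y.
Definition concave01 (g : R -> R) : Prop :=
  forall x y t : R, 0 <= x <= 1 -> 0 <= y <= 1 -> 0 <= t <= 1 ->
    t * g x + (1 - t) * g y <= g (t * x + (1 - t) * y).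

Definition Btilde (n : nat) (f : R -> R) (x : R) : R :=
  \sum_(k < n.+1)
    (Num.floor (f (k%:R / n%:R) * 'C(n, k)%:R))%:~R * x ^+ k * (1 - x) ^+ (n - k).

(* \widehat{B}_n(f) with integer coefficients c k; the theorem requires each
   c k to be a nearest integer to f(k/n) C(n,k) (ties chosen arbitrarily) *)
Definition Bhat_with (n : nat) (c : nat -> int) (x : R) : R :=
  \sum_(k < n.+1) (c k)%:~R * x ^+ k * (1 - x) ^+ (n - k).

Definition nearest_int_choice (n : nat) (f : R -> R) (c : nat -> int) : Prop :=
  forall k, (k <= n)%N -> `|(c k)%:~R - f (k%:R / n%:R) * 'C(n, k)%:R| <= 2^-1.

End Defs.
Arguments Bhat_with {R} n c x.
Arguments nearest_int_choice {R} n f c.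

(* Main.v *)
Require Import Defs.
From mathcomp Require Import all_boot all_order all_algebra.
From mathcomp Require Import all_classical all_reals all_analysis.
From mathcomp Require Import ring lra zify.
Import Order.TTheory GRing.Theory Num.Theory.

Lemma binom_lb a b : ((a.+2) * (b.+2) <= 2 * 'C(a.+1 + b.+1, a.+1))%N.
Proof.
elim: a b => [|a IHa] b.
  by rewrite add1n bin1; lia.
elim: b => [|b IHb].
  rewrite addn1 binSn; lia.
have e : (a.+2 + b.+2 = (a.+2 + b.+1).+1)%N by rewrite addnS.
rewrite e binS.
have h1 := IHa b.+1.
have e2 : (a.+2 + b.+1 = a.+1 + b.+2)%N by rewrite addSnnS.
rewrite [X in 'C(X, a.+1)]e2.
nia.
Qed.

Lemma binom_K n j K : (1 <= j)%N -> (j + 1 <= n)%N -> (1 <= K)%N -> (K + 1 <= n)%N ->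
  (K <= j + 1)%N -> (j <= K + 1)%N -> (K * (n - K) <= 2 * 'C(n, j))%N.
Proof.
move=> j1 jn K1 Kn h1 h2.
have [a ea] : exists a, j = a.+1 by exists j.-1; lia.
have [b eb] : exists b, n = a.+1 + b.+1 by exists (n - j - 1); lia.
subst j n.
have := binom_lb a b; nia.
Qed.

Local Open Scope ring_scope.

Lemma aux_ring (T : comRingType) (c1 c2 c3 M n1 n2 A B B' XA : T) :
  c1 * n1 = M * c2 -> c1 * n2 = M * c3 ->
  c1 * (A * n1 * B + XA * (-1 * B' * n2)) = M * (c2 * (A * B) - c3 * (XA * B')).
Proof.
move=> h1 h2.
have -> : c1 * (A * n1 * B + XA * (-1 * B' * n2)) = (c1 * n1) * (A * B) - (c1 * n2) * (XA * B') by ring.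
by rewrite h1 h2; ring.
Qed.

Section Bern.
Variable R : realType.

Definition bern (m k : nat) : {poly R} :=
  'C(m, k)%:R *: ('X^k * (1 - 'X) ^+ (m - k)).
Definition bL (m k : nat) : {poly R} := if k is j.+1 then bern m j else 0.
Definition Bp (m : nat) (d : nat -> R) : {poly R} :=
  \sum_(k < m.+1) d k *: bern m k.

Lemma deriv_bern m k : (bern m.+1 k)^`() = m.+1%:R *: (bL m k - bern m k).
Proof.
rewrite /bern derivZ derivM derivXn deriv_exp derivB derivC derivX sub0r.
case: k => [|j] /=.
  rewrite !expr0 !mul1r mul0r add0r bin0 subn0 /= scale1r.
  by rewrite sub0r bin0 subn0 scale1r scaler_nat mulN1r mulNrn.
rewrite /bern subSS -subnS.
have h1 : ('C(m.+1, j.+1) * j.+1 = m.+1 * 'C(m, j))%N.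
  by rewrite mulnC -mul_bin_diag.
have h2 : ('C(m.+1, j.+1) * (m - j) = m.+1 * 'C(m, j.+1))%N.
  by rewrite mulnC (mul_bin_down m.+1 j.+1).
have h1' : ('C(m.+1, j.+1)%:R * j.+1%:R = m.+1%:R * 'C(m, j)%:R :> {poly R}).
  by rewrite -!natrM h1.
have h2' : ('C(m.+1, j.+1)%:R * (m - j)%:R = m.+1%:R * 'C(m, j.+1)%:R :> {poly R}).
  by rewrite -!natrM h2.
rewrite -!mul_polyC !polyC_natr.
set c1 := 'C(m.+1, j.+1)%:R. set A := 'X^j. set B := (1 - 'X)^+(m-j).
set B' := (1 - 'X)^+(m - j.+1).
rewrite -(mulr_natr A) -(mulr_natr (-1 * B')).
exact: aux_ring.
Qed.

Lemma deriv_Bp m d : (Bp m.+1 d)^`() = m.+1%:R *: Bp m (fun k => d k.+1 - d k).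
Proof.
rewrite /Bp raddf_sum /=.
under eq_bigr do rewrite derivZ deriv_bern scalerA mulrC -scalerA scalerBr.
rewrite -scaler_sumr; congr (_ *: _).
rewrite sumrB big_ord_recl /= [X in _ - X]big_ord_recr /= {3}/bern bin_small //.
rewrite scale0r !scaler0 addr0 add0r -sumrB; apply: eq_bigr => i _.
by rewrite /bump /= add0n add1n scalerBl.
Qed.

Lemma D1_horner (p : {poly R}) : 'D_1 (horner p) = horner p^`().
Proof. by apply/funext => z; rewrite -derive1E -derivE. Qed.

Lemma Bp_eval m d x :
  (Bp m d).[x] = \sum_(k < m.+1) d k * ('C(m, k)%:R * x ^+ k * (1 - x) ^+ (m - k)).
Proof.
rewrite /Bp horner_sum; apply: eq_bigr => i _.
by rewrite hornerZ /bern hornerZ hornerM hornerXn horner_exp hornerD hornerN hornerX hornerC !mulrA.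
Qed.


Lemma Bp_ge0 m d x : 0 <= x <= 1 -> (forall k, (k <= m)%N -> 0 <= d k) ->
  0 <= (Bp m d).[x].
Proof.
move=> /andP[x0 x1] hd; rewrite Bp_eval; apply: sumr_ge0 => i _.
apply: mulr_ge0; first by apply: hd; rewrite -ltnS.
by rewrite !mulr_ge0 ?exprn_ge0 ?subr_ge0.
Qed.

Lemma Bp0_const d : Bp 0 d = (d 0%N)%:P.
Proof.
by rewrite /Bp big_ord1 /bern bin0 expr0 mul1r subnn expr0 scale1r alg_polyC.
Qed.

Lemma Bp_DD n d z : 0 <= z <= 1 ->
  (forall k, (k.+2 <= n)%N -> 0 <= d k.+2 - d k.+1 - (d k.+1 - d k)) ->
  0 <= (Bp n d)^`()^`().[z].
Proof.
move=> hz hd; case: n hd => [|[|m]] hd.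
- by rewrite Bp0_const derivC deriv0 horner0.
- by rewrite deriv_Bp derivZ Bp0_const derivC scaler0 horner0.
rewrite deriv_Bp derivZ deriv_Bp scalerA hornerZ; apply: mulr_ge0.
  by apply: mulr_ge0; apply: ler0n.
by apply: Bp_ge0 => // k km; apply: hd.
Qed.


Lemma Bp_convex n d :
  (forall k, (k.+2 <= n)%N -> 0 <= d k.+2 - d k.+1 - (d k.+1 - d k)) ->
  convex01 (horner (Bp n d)).
Proof.
move=> hd x y t hx hy ht.
wlog xy : x y t hx hy ht / x <= y.
  move=> H; case: (leP x y) => [xy|yx]; first exact: H.
  have ht' : 0 <= 1 - t <= 1.
    by move: ht => /andP[? ?]; apply/andP; split; lra.
  have := H y x (1 - t) hy hx ht' (ltW yx).
  have -> : 1 - (1 - t) = t by ring.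
  by rewrite addrC [X in _ <= X]addrC.
move: ht => /andP[t0 t1].
have := @second_derivative_convex R (horner (Bp n d)) x y _ _ _ _ _ (Itv01 t0 t1) xy.
rewrite !convRE /=.
apply.
- move=> z /andP[xz zy]; rewrite D1_horner -derive1E -derivE; apply: Bp_DD => //.
  move: hx hy => /andP[? ?] /andP[? ?]; apply/andP; split; lra.
- by apply: cvg_at_left_filter; apply: continuous_horner.
- by apply: cvg_at_right_filter; apply: continuous_horner.
- by move=> z _; apply: derivable_horner.
- by move=> z _; rewrite D1_horner; apply: derivable_horner.
Qed.

End Bern.

Section Calc.
Variable R : realType.

Lemma isd_comp (f g : R -> R) (x df dg : R) : is_derive x 1 f df ->
  is_derive (f x) 1 g dg -> is_derive x 1 (g \o f) (dg * df).
Proof.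
move=> hf hg.
have df' : derivable f x 1 by case: hf.
have dg' : derivable g (f x) 1 by case: hg.
apply: DeriveDef.
  apply/derivable1_diffP; apply: differentiable_comp; exact/derivable1_diffP.
by rewrite -derive1E derive1_comp // !derive1E !derive_val.
Qed.

Lemma isd_lin (a b x : R) : is_derive x 1 (fun s => a + b * s) b.
Proof.
have -> : (fun s => a + b * s) = cst a + b \*: (@id R).
  by apply/funext => s /=.
have h := is_deriveD (is_derive_cst a x 1) (is_deriveZ b (is_derive_id x 1)).
move: h; rewrite add0r => h.
by move: h; rewrite [X in is_derive _ _ _ X]mulr1.
Qed.

Lemma isd_ln_lin (a b x : R) : 0 < a + b * x ->
  is_derive x 1 (fun s => ln (a + b * s)) (b / (a + b * x)).
Proof.
move=> hp.
have := isd_comp _ _ _ _ _ (isd_lin a b x) (is_derive1_ln hp).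
by rewrite mulrC.
Qed.


Lemma H_ge0 (t : R) : 0 <= t < 1 -> 2 * t <= ln (1 + t) - ln (1 - t).
Proof.
move=> /andP[t0 t1].
pose H := (fun s : R => ln (1 + 1 * s)) - (fun s => ln (1 + (-1) * s)) - (fun s => 2 * s).
have dH : forall s : R, -1 < s < 1 ->
   is_derive s 1 H (1 / (1 + 1 * s) - (-1) / (1 + (-1) * s) - 2).
  move=> s /andP[s1 s2].
  apply: is_deriveB; last first.
    have := is_deriveZ 2 (is_derive_id s 1).
    by rewrite [X in is_derive _ _ _ X]mulr1.
  apply: is_deriveB; apply: isd_ln_lin; lra.
have dH' : forall s : R, s \in `[0, t] -> derivable H s 1.
  move=> s; rewrite in_itv /= => /andP[? ?].
  by case: (dH s ltac:(apply/andP; split; lra)).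
have key : H 0 <= H t.
  apply: (@ger0_derive1_ndecr R H 0 t) => //.
  - move=> s; rewrite in_itv/= => /andP[? ?]; apply: dH'; rewrite in_itv/=; apply/andP; split; lra.
  - move=> s; rewrite in_itv/= => /andP[? ?].
    rewrite derive1E; have [_ ->] := dH s ltac:(apply/andP; split; lra).
    rewrite !mul1r !mulN1r.
    have h1 : 1 - s <= 1 / (1 + s) by rewrite ler_pdivlMr; nra.
    have h2 : 1 + s <= 1 / (1 - s) by rewrite ler_pdivlMr; nra.
    rewrite !div1r in h1 h2; move: h1 h2; set a := (1+s)^-1; set b := (1-s)^-1; rewrite opprK => ha hb. have hab : 2 <= a + b by lra. rewrite subr_ge0; exact: hab.
  - apply: derivable_within_continuous => s hs; exact: dH'.
have e : forall x, H x = ln (1 + 1*x) - ln (1 + -1 * x) - 2 * x by [].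
move: key; rewrite !e !mulr0 !addr0 ln1 !subr0 !mul1r mulN1r; lra.
Qed.


Lemma G_ge0 (t : R) : 0 <= t < 1 ->
  t ^+ 2 <= (1 + t) * ln (1 + t) + (1 - t) * ln (1 - t).
Proof.
move=> /andP[t0 t1].
pose G := (fun s : R => 1 + 1 * s) * (fun s => ln (1 + 1 * s))
  + (fun s : R => 1 + (-1) * s) * (fun s => ln (1 + (-1) * s)) - (@id R) * (@id R).
have e : forall x, G x = (1 + 1 * x) * ln (1 + 1 * x) + (1 + -1 * x) * ln (1 + -1 * x) - x * x by [].
have dG : forall s : R, -1 < s < 1 ->
   is_derive s 1 G (ln (1 + s) - ln (1 - s) - 2 * s).
  move=> s /andP[s1 s2].
  have h := is_deriveB (is_deriveD (is_deriveM (isd_lin 1 1 s) (isd_ln_lin 1 1 s ltac:(lra)))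
     (is_deriveM (isd_lin 1 (-1) s) (isd_ln_lin 1 (-1) s ltac:(lra))))
     (is_deriveM (is_derive_id s 1) (is_derive_id s 1)).
  apply: (is_derive_eq h); rewrite /GRing.scale /= !mul1r !mulN1r.
  have p1 : 1 + s != 0 by apply/eqP => h'; lra.
  have p2 : 1 - s != 0 by apply/eqP => h'; lra.
  field.
  by rewrite p1 p2.
have dG' : forall s : R, s \in `[0, t] -> derivable G s 1.
  move=> s; rewrite in_itv /= => /andP[? ?].
  by case: (dG s ltac:(apply/andP; split; lra)).
have key : G 0 <= G t.
  apply: (@ger0_derive1_ndecr R G 0 t) => //.
  - move=> s; rewrite in_itv/= => /andP[? ?]; apply: dG'; rewrite in_itv/=; apply/andP; split; lra.
  - move=> s; rewrite in_itv/= => /andP[? ?].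
    rewrite derive1E; have [_ ->] := dG s ltac:(apply/andP; split; lra).
    have hH := H_ge0 s ltac:(apply/andP; split; lra).
    lra.
  - apply: derivable_within_continuous => s hs; exact: dG'.
move: key; rewrite !e !mulr0 !addr0 ln1 !mulr0 !subr0 !mul1r mulN1r expr2; lra.
Qed.


Lemma ln2_ge : 1 / 2 <= ln (2 : R).
Proof.
have h := @le_ln1Dx R (- (1/2)) ltac:(lra).
have e : 1 + - (1 / 2) = (2 : R)^-1 by field.
move: h; rewrite e lnV ?posrE //; lra.
Qed.

Lemma xlnx_dd (u d : R) : 0 < d <= u ->
  d ^+ 2 / u <= xlnx (u - d) - 2 * xlnx u + xlnx (u + d).
Proof.
move=> /andP[d0 du].
have u0 : 0 < u by lra.
have xl : forall v : R, 0 < v -> xlnx v = v * ln v.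
  by move=> v v0; rewrite /xlnx gt_eqF.
case: (ltP d u) => [dlt|dge]; last first.
  have -> : d = u by lra.
  rewrite subrr /xlnx eqxx (gt_eqF u0) gt_eqF; last lra.
  have -> : u + u = 2 * u by ring.
  rewrite lnM ?posrE //.
  have := ln2_ge.
  have -> : u ^+ 2 / u = u by rewrite expr2 mulfK // gt_eqF.
  nra.
pose t := d / u.
have t0 : 0 < t by rewrite divr_gt0.
have t1 : t < 1 by rewrite ltr_pdivrMr // mul1r.
have eu1 : u - d = u * (1 - t) by rewrite /t; field; rewrite gt_eqF.
have eu2 : u + d = u * (1 + t) by rewrite /t; field; rewrite gt_eqF.
have ed : d ^+ 2 / u = u * t ^+ 2 by rewrite /t; field; rewrite gt_eqF.
rewrite eu1 eu2 ed !xl; [|nra|nra|lra].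
rewrite !lnM ?posrE //; [|lra|lra].
have := G_ge0 t ltac:(apply/andP; split; lra).
nra.
Qed.

End Calc.

Section Main.
Variable R : realType.

Definition ww (n k : nat) : R := ((k.+1)%:R * (n - k.+1)%:R)^-1.

Lemma ww_ge0 n k : 0 <= ww n k.
Proof. by rewrite /ww invr_ge0 mulr_ge0. Qed.

Lemma Phi_dd_real (kr N : R) : 0 <= kr -> kr + 2 <= N ->
  6 / ((kr + 1) * (N - kr - 1)) <=
  Phi (kr / N) - 2 * Phi ((kr + 1) / N) + Phi ((kr + 2) / N).
Proof.
move=> k0 kN.
have N0 : N != 0 by apply/eqP => h; lra.
pose u := (kr + 1) / N; pose u' := (N - kr - 1) / N; pose d := 1 / N.
have d0 : 0 < d by rewrite /d divr_gt0 //; lra.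
have du : d <= u by rewrite /d /u ler_pM2r ?invr_gt0; lra.
have du' : d <= u' by rewrite /d /u' ler_pM2r ?invr_gt0; lra.
have h1 := @xlnx_dd R u d ltac:(apply/andP; split; lra).
have h2 := @xlnx_dd R u' d ltac:(apply/andP; split; lra).
have e1 : kr / N = u - d by rewrite /u /d; field.
have e2 : (kr + 2) / N = u + d by rewrite /u /d; field.
have e3 : 1 - kr / N = u' + d by rewrite /u' /d; field.
have e4 : 1 - (kr + 1) / N = u' by rewrite /u'; field.
have e5 : 1 - (kr + 2) / N = u' - d by rewrite /u' /d; field.
have e6 : d ^+ 2 / u + d ^+ 2 / u' = 1 / ((kr + 1) * (N - kr - 1)).
  rewrite /u /u' /d; field.
  rewrite N0 andbT; apply/andP; split; apply/eqP => h; lra.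
rewrite /Phi e3 e4 e5 -/u e1 e2.
have : 6 / ((kr + 1) * (N - kr - 1)) = 6 * (1 / ((kr + 1) * (N - kr - 1))) by rewrite mulrA mulr1.
lra.
Qed.


Lemma natr_S (k : nat) : (k.+1%:R : R) = k%:R + 1.
Proof. by rewrite -natr1. Qed.

Lemma Phi_dd n k : (k.+2 <= n)%N ->
  6 * ww n k <= Phi (k%:R / n%:R) - 2 * Phi (k.+1%:R / n%:R) + Phi (k.+2%:R / n%:R).
Proof.
move=> hk.
have e1 : (k.+2%:R : R) = k%:R + 2 by rewrite -[k.+2]addn2 natrD.
have e2 : ((n - k.+1)%:R : R) = n%:R - k%:R - 1 by rewrite natrB ?natr_S; [ring| lia].
have hkn : (k%:R + 2 : R) <= n%:R by rewrite -e1 ler_nat.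
have := @Phi_dd_real k%:R n%:R (ler0n R k) hkn.
have e0 : (k.+1%:R : R) = k%:R + 1 by rewrite natr_S.
by rewrite /ww e0 e1 e2.
Qed.

Lemma mid_eq n k : (0 < n)%N ->
  (1/2 : R) * (k%:R / n%:R) + (1 - 1/2) * (k.+2%:R / n%:R) = k.+1%:R / n%:R.
Proof.
move=> n0.
have e1 : (k.+2%:R : R) = k%:R + 2 by rewrite -[k.+2]addn2 natrD.
have N0 : (n%:R : R) != 0 by rewrite pnatr_eq0 -lt0n.
have e0 : (k.+1%:R : R) = k%:R + 1 by rewrite natr_S.
by rewrite e1 e0; field.
Qed.

Lemma in01 n k : (k <= n)%N -> (0 < n)%N -> 0 <= (k%:R / n%:R : R) <= 1.
Proof.
move=> kn n0; apply/andP; split; first by rewrite divr_ge0.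
by rewrite ler_pdivrMr ?ltr0n // mul1r ler_nat.
Qed.

Lemma F_conv n k (f : R -> R) : (0 < n)%N -> (k.+2 <= n)%N ->
  convex01 (fun x => f x - Phi x) ->
  6 * ww n k <= f (k%:R / n%:R) - 2 * f (k.+1%:R / n%:R) + f (k.+2%:R / n%:R).
Proof.
move=> n0 hk hc.
have h := hc (k%:R / n%:R) (k.+2%:R / n%:R) (1/2) (@in01 n k (ltnW (ltnW hk)) n0) (@in01 n k.+2 hk n0) ltac:(apply/andP; split; lra).
rewrite mid_eq // in h.
have := @Phi_dd n k hk; lra.
Qed.

Lemma F_conc n k (f : R -> R) : (0 < n)%N -> (k.+2 <= n)%N ->
  concave01 (fun x => f x + Phi x) ->
  f (k%:R / n%:R) - 2 * f (k.+1%:R / n%:R) + f (k.+2%:R / n%:R) <= - (6 * ww n k).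
Proof.
move=> n0 hk hc.
have h := hc (k%:R / n%:R) (k.+2%:R / n%:R) (1/2) (@in01 n k (ltnW (ltnW hk)) n0) (@in01 n k.+2 hk n0) ltac:(apply/andP; split; lra).
rewrite mid_eq // in h.
have := @Phi_dd n k hk; lra.
Qed.

Lemma q_small n K j (al e : R) : 0 <= al -> (1 <= K)%N -> (K + 1 <= n)%N ->
  (K <= j + 1)%N -> (j <= K + 1)%N -> (j <= n)%N -> `|e| <= al ->
  ((j == 0)%N || (j == n) -> e = 0) ->
  `|e / 'C(n, j)%:R| <= 2 * al * (K%:R * (n - K)%:R)^-1.
Proof.
move=> al0 K1 Kn h1 h2 jn he hz.
have rhs0 : 0 <= 2 * al * (K%:R * (n - K)%:R)^-1.
  by rewrite mulr_ge0 ?mulr_ge0 // invr_ge0 mulr_ge0.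
case/boolP: ((j == 0)%N || (j == n)) => hj.
  by rewrite hz // mul0r normr0.
move: hj; rewrite negb_or => /andP[j0 jn'].
have j1 : (1 <= j)%N by rewrite lt0n.
have jn1 : (j + 1 <= n)%N by rewrite addn1 ltn_neqAle jn' jn.
have hb := @binom_K n j K j1 jn1 K1 Kn h1 h2.
have C0 : (0 : R) < 'C(n, j)%:R by rewrite ltr0n bin_gt0.
have KM0 : (0 : R) < K%:R * (n - K)%:R by rewrite mulr_gt0 // ltr0n; lia.
have hbr : (K%:R * (n - K)%:R : R) <= 2 * 'C(n, j)%:R.
  by rewrite -natrM -(natrM _ 2) ler_nat.
rewrite normrM normfV (gtr0_norm C0).
rewrite ler_pdivrMr // mulrAC ler_pdivlMr //.
have := ler_wpM2r (ltW KM0) he; have := ler_wpM2l al0 hbr; lra.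
Qed.


Definition vv n (f : R -> R) j : R := f (j%:R / n%:R) * 'C(n, j)%:R.

Lemma vv_int n f j : (0 < n)%N -> f 0 \is a Num.int -> f 1 \is a Num.int ->
  (j == 0)%N || (j == n) -> vv n f j \is a Num.int.
Proof.
move=> n0 h0 h1 /orP[] /eqP ->; rewrite /vv.
  by rewrite mul0r bin0 mulr1.
by rewrite divff ?pnatr_eq0 -?lt0n // binn mulr1.
Qed.

Lemma Dq_eq n (f : R -> R) j (c : R) : (j <= n)%N ->
  c / 'C(n, j)%:R - f (j%:R / n%:R) = (c - vv n f j) / 'C(n, j)%:R.
Proof.
move=> jn; have C0 : ('C(n, j)%:R : R) != 0 by rewrite pnatr_eq0 -lt0n bin_gt0.
by rewrite /vv; field.
Qed.

Lemma dd_from_conv n (F D : nat -> R) k : 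
  6 * ww n k <= F k - 2 * F k.+1 + F k.+2 ->
  `|(D k - F k) - 2 * (D k.+1 - F k.+1) + (D k.+2 - F k.+2)| <= 4 * ww n k ->
  0 <= D k.+2 - D k.+1 - (D k.+1 - D k).
Proof. move=> h1 /ler_normlP [h2 h3]; have := ww_ge0 n k; lra. Qed.

Lemma dd_from_conc n (F D : nat -> R) k : 
  F k - 2 * F k.+1 + F k.+2 <= - (6 * ww n k) ->
  `|(D k - F k) - 2 * (D k.+1 - F k.+1) + (D k.+2 - F k.+2)| <= 4 * ww n k ->
  0 <= - D k.+2 - - D k.+1 - (- D k.+1 - - D k).
Proof. move=> h1 /ler_normlP [h2 h3]; have := ww_ge0 n k; lra. Qed.

Lemma dq_floor (q : nat -> R) k w :
  -2 * w <= q k <= 0 -> -2 * w <= q k.+1 <= 0 -> -2 * w <= q k.+2 <= 0 ->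
  `|q k - 2 * q k.+1 + q k.+2| <= 4 * w.
Proof.
move=> /andP[? ?] /andP[? ?] /andP[? ?]; apply/ler_normlP; split; lra.
Qed.

Lemma dq_round (q : nat -> R) k w :
  `|q k| <= w -> `|q k.+1| <= w -> `|q k.+2| <= w ->
  `|q k - 2 * q k.+1 + q k.+2| <= 4 * w.
Proof.
move=> /ler_normlP[? ?] /ler_normlP[? ?] /ler_normlP[? ?]; apply/ler_normlP; split; lra.
Qed.

Lemma q_small' n k j (al e : R) : (k.+2 <= n)%N -> 0 <= al ->
  (k <= j)%N -> (j <= k.+2)%N -> `|e| <= al ->
  ((j == 0)%N || (j == n) -> e = 0) ->
  `|e / 'C(n, j)%:R| <= 2 * al * ww n k.
Proof.
move=> hk al0 h1 h2 he hz.
apply: (@q_small n k.+1 j al e) => //; lia.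
Qed.

Lemma floor_q n f k j : (0 < n)%N -> f 0 \is a Num.int -> f 1 \is a Num.int ->
  (k.+2 <= n)%N -> (k <= j)%N -> (j <= k.+2)%N ->
  -2 * ww n k <= ((Num.floor (vv n f j))%:~R - vv n f j) / 'C(n, j)%:R <= 0.
Proof.
move=> n0 h0 h1 hk kj jk.
set e := (_ - _).
have e0 : e <= 0 by rewrite /e subr_le0 floor_le.
have e1 : -1 <= e.
  have := floorD1_gt (vv n f j); rewrite intrD /e; lra.
have hq := @q_small' n k j 1 e hk ler01 kj jk ltac:(apply/ler_normlP; split; lra).
have hq' : `|e / 'C(n, j)%:R| <= 2 * 1 * ww n k.
  apply: hq => hj; rewrite /e floorK ?subrr //; exact: vv_int.
have Cp : (0 : R) <= ('C(n, j)%:R)^-1 by rewrite invr_ge0.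
move: hq' => /ler_normlP [ha hb]; apply/andP; split; first lra.
by rewrite mulr_le0_ge0.
Qed.

Lemma round_q n f k j (c : nat -> int) : (0 < n)%N -> f 0 \is a Num.int -> f 1 \is a Num.int ->
  nearest_int_choice n f c ->
  (k.+2 <= n)%N -> (k <= j)%N -> (j <= k.+2)%N ->
  `|((c j)%:~R - vv n f j) / 'C(n, j)%:R| <= ww n k.
Proof.
move=> n0 h0 h1 hc hk kj jk.
have jn : (j <= n)%N by apply: leq_trans jk hk.
have := @q_small' n k j (2^-1) ((c j)%:~R - vv n f j) hk ltac:(lra) kj jk (hc j jn).
rewrite mulfV ?mul1r; last by rewrite pnatr_eq0.
apply => hj.
have /intrP [m hm] := @vv_int n f j n0 h0 h1 hj.
have := hc j jn; rewrite -/(vv n f j) hm -intrB => hle.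
have hz : (c j - m = 0)%R.
  case: (eqVneq (c j - m) 0) => // hne.
  have hne' : ((c j - m)%:~R : R) != 0 by rewrite intr_eq0.
  have := norm_intr_ge1 (intr_int R (c j - m)) hne'.
  move: hle; set z := `|_|; move=> a b; exfalso; lra.
by rewrite hz.
Qed.


Lemma sum_to_Bp n (a : nat -> R) :
  (fun x : R => \sum_(k < n.+1) a k * x ^+ k * (1 - x) ^+ (n - k))
  = horner (Bp R n (fun k => a k / 'C(n, k)%:R)).
Proof.
apply/funext => x; rewrite Bp_eval; apply: eq_bigr => i _.
have C0 : ('C(n, i)%:R : R) != 0 by rewrite pnatr_eq0 -lt0n bin_gt0 -ltnS.
by rewrite !mulrA mulfVK.
Qed.

Lemma Bp_neg n (d : nat -> R) x : (Bp R n (fun k => - d k)).[x] = - (Bp R n d).[x].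
Proof.
rewrite !Bp_eval -sumrN; apply: eq_bigr => i _; by rewrite mulNr.
Qed.

Lemma Bp_concave n d :
  (forall k, (k.+2 <= n)%N -> 0 <= - d k.+2 - - d k.+1 - (- d k.+1 - - d k)) ->
  concave01 (horner (Bp R n d)).
Proof.
move=> hd x y t hx hy ht.
have := @Bp_convex R n (fun k => - d k) hd x y t hx hy ht; rewrite !Bp_neg; lra.
Qed.

End Main.

Theorem theorem1p9 (R : realType) (f : R -> R) :
  f 0 \is a Num.int -> f 1 \is a Num.int ->
  (convex01 (fun x => f x - Phi x) ->
     forall n : nat, (0 < n)%N ->
       convex01 (Btilde n f) /\
       (forall c : nat -> int, nearest_int_choice n f c -> convex01 (Bhat_with (R:=R) n c)))
  /\
  (concave01 (fun x => f x + Phi x) ->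
     forall n : nat, (0 < n)%N ->
       concave01 (Btilde n f) /\
       (forall c : nat -> int, nearest_int_choice n f c -> concave01 (Bhat_with (R:=R) n c))).
Proof.
move=> h0 h1.
have Bt : forall n, Btilde n f = horner (Bp R n (fun k => (Num.floor (vv R n f k))%:~R / 'C(n, k)%:R)).
  by move=> n; rewrite -sum_to_Bp.
have Bh : forall n c, Bhat_with n c = horner (Bp R n (fun k => (c k)%:~R / 'C(n, k)%:R)) :> (R -> R).
  by move=> n c; rewrite -sum_to_Bp.
split=> hconv n n0; split.
- rewrite Bt; apply: (@Bp_convex R) => k hk.
  apply: (@dd_from_conv R n (fun j => f (j%:R / n%:R)) (fun k => (Num.floor (vv R n f k))%:~R / 'C(n, k)%:R) k); first exact: F_conv.
  rewrite !Dq_eq; [|lia|lia|lia].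
  apply: (@dq_floor R (fun j => ((Num.floor (vv R n f j))%:~R - vv R n f j) / 'C(n, j)%:R) k (ww R n k)); apply: floor_q => //; lia.
- move=> c hc; rewrite Bh; apply: (@Bp_convex R) => k hk.
  apply: (@dd_from_conv R n (fun j => f (j%:R / n%:R)) (fun k => (c k)%:~R / 'C(n, k)%:R) k); first exact: F_conv.
  rewrite !Dq_eq; [|lia|lia|lia].
  apply: (@dq_round R (fun j => ((c j)%:~R - vv R n f j) / 'C(n, j)%:R) k (ww R n k)); apply: round_q => //; lia.
- rewrite Bt; apply: Bp_concave => k hk.
  apply: (@dd_from_conc R n (fun j => f (j%:R / n%:R)) (fun k => (Num.floor (vv R n f k))%:~R / 'C(n, k)%:R) k); first exact: F_conc.
  rewrite !Dq_eq; [|lia|lia|lia].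
  apply: (@dq_floor R (fun j => ((Num.floor (vv R n f j))%:~R - vv R n f j) / 'C(n, j)%:R) k (ww R n k)); apply: floor_q => //; lia.
- move=> c hc; rewrite Bh; apply: Bp_concave => k hk.
  apply: (@dd_from_conc R n (fun j => f (j%:R / n%:R)) (fun k => (c k)%:~R / 'C(n, k)%:R) k); first exact: F_conc.
  rewrite !Dq_eq; [|lia|lia|lia].
  apply: (@dq_round R (fun j => ((c j)%:~R - vv R n f j) / 'C(n, j)%:R) k (ww R n k)); apply: round_q => //; lia.
Qed.
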